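(* Let $G$ be a graph, $k,\ell\ge1$, $S$ an independent set of size $k$, and $J_0=S,J_1,\dots,J_\ell$ independent sets of $G$. Define $\mathcal{C}_0=\{\{(S,k)\}\}$ and, for $i\in\{1,\dots,\ell\}$, let $\mathcal{C}_i$ contain, for every $C\in\mathcal{C}_{i-1}$ and every constraint $(X,b)\in C$, the constraint set $C'$ consisting of: $(N(X)\cap J_i,1)$; $(X\cap J_i,b-1)$ if $b\ge2$ (nothing if $b=1$); and $(X'\cap J_i,b')$ for every other constraint $(X',b')\in C$. Let $i\in\{0,\dots,\ell\}$. If $Z\subseteq J_i$ is an independent set of size $k$ that satisfies at least one constraint set in $\mathcal{C}_i$, then $Z$ is reachable from $S$ by token slides, i.e., there is a sequence $S=I_0,I_1,\dots,I_m=Z$ of independent sets of size $k$ in $G$ such that each $I_{j+1}=(I_j\setminus\{u\})\cup\{v\}$ for some $u\in I_j$, $v\notin I_j$ with $\{u,v\}\in E(G)$.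
   Context: A constraint is a pair $(X,b)$ with $X\subseteq V(G)$ and $b$ a positive integer. A set $Z\subseteq V(G)$ satisfies $(X,b)$ if $|Z\cap X|=b$, and satisfies a constraint set $C$ if it satisfies every constraint in $C$. For $X\subseteq V(G)$, $N(X)=\{v\notin X: v\text{ adjacent to some }u\in X\}$. In the paper, $J_1,\dots,J_\ell$ are members of an independence covering family for $(G,k)$. *)

(* Defs.v *)
From HB Require Import structures.
From mathcomp Require Import all_boot.
From mathcomp Require Import finmap.
Set Implicit Arguments. Unset Strict Implicit. Unset Printing Implicit Defensive.
Local Open Scope fset_scope.

(* A simple graph: vertex type T (finite), edge relation e (assumed symmetric,
   irreflexive in the theorem). *)

Definition independent (T : finType) (e : rel T) (A : {set T}) : Prop :=
  forall x y, x \in A -> y \in A -> ~~ e x y.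

Definition nbh (T : finType) (e : rel T) (X : {set T}) : {set T} :=
  [set v | (v \notin X) && [exists u in X, e u v]].

Definition constraint (T : finType) := ({set T} * nat)%type.
Definition cset (T : finType) := {fset constraint T}.

Definition sat_constraint (T : finType) (Z : {set T}) (c : constraint T) : Prop :=
  #|Z :&: c.1| = c.2.
Definition sat_cset (T : finType) (Z : {set T}) (C : cset T) : Prop :=
  forall c, c \in C -> sat_constraint Z c.

Definition cstep (T : finType) (e : rel T) (J : {set T}) (C : cset T)
  (c : constraint T) : cset T :=
  [fset ((nbh e c.1 :&: J), 1%N)]
  `|` (if (2 <= c.2)%N then [fset ((c.1 :&: J), c.2.-1)] else fset0)
  `|` [fset ((x.1 :&: J), x.2) | x in C `\ c].

(* Cfam e J S k i C  <->  C belongs to the family C_i *)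
Fixpoint Cfam (T : finType) (e : rel T) (J : nat -> {set T}) (S : {set T})
  (k : nat) (i : nat) (C : cset T) : Prop :=
  match i with
  | 0 => C = [fset (S, k)]
  | i'.+1 => exists C0 c, Cfam e J S k i' C0 /\ c \in C0 /\ C = cstep e (J i) C0 c
  end.

Definition slide (T : finType) (e : rel T) (A B : {set T}) : Prop :=
  exists u v, u \in A /\ v \notin A /\ e u v /\ B = v |: (A :\ u).

Definition TS_reachable (T : finType) (e : rel T) (k : nat) (S Z : {set T}) : Prop :=
  exists (m : nat) (I : nat -> {set T}),
    I 0 = S /\ I m = Z /\
    (forall j, (j <= m)%N -> independent e (I j) /\ #|I j| = k) /\
    (forall j, (j < m)%N -> slide e (I j) (I j.+1)).

(* Main.v *)
Require Import Defs.
From HB Require Import structures.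
From mathcomp Require Import all_boot.
From mathcomp Require Import finmap.
Set Implicit Arguments. Unset Strict Implicit.
Local Open Scope nat_scope.

Section Aux.
Variable T : finType.
Implicit Types (A B Z : {set T}) (s : seq (constraint T)).

Definition dj A B := forall x, x \in A -> x \in B -> False.

Fixpoint U s : {set T} := match s with [::] => set0 | c :: t => c.1 :|: U t end.

Fixpoint pdisj s : Prop := match s with
 | [::] => True
 | c :: t => (forall c', c' \in t -> dj c.1 c'.1) /\ pdisj t end.

Lemma card_dj Z A B : dj A B -> #|Z :&: (A :|: B)| = #|Z :&: A| + #|Z :&: B|.
Proof.
move=> h; rewrite setIUr cardsU.
have -> : (Z :&: A) :&: (Z :&: B) = set0.
  apply/setP=> x; rewrite !inE; apply/negP=> /andP [/andP [_ ha] /andP [_ hb]]; exact: (h x).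
by rewrite cards0 subn0.
Qed.

Lemma dj_U A s : (forall c', c' \in s -> dj A c'.1) -> dj A (U s).
Proof.
elim: s => [|c t IH] /= h x hx; first by rewrite inE.
rewrite inE => /orP [] hy.
- exact: (h c (mem_head _ _) x hx hy).
- by apply: (IH _ x hx hy) => c' hc'; apply: h; rewrite inE hc' orbT.
Qed.

Lemma cover_card Z s : pdisj s -> (forall c, c \in s -> #|Z :&: c.1| = c.2) ->
  #|Z :&: U s| = sumn (map snd s).
Proof.
elim: s => [|c t IH] /= ; first by rewrite setI0 cards0.
move=> [hd hp] h; rewrite card_dj; last exact: dj_U.
rewrite h ?mem_head // IH // => c' hc'; apply: h; by rewrite inE hc' orbT.
Qed.

Lemma mem_U x s : x \in U s -> exists2 c, c \in s & x \in c.1.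
Proof.
elim: s => [|c t IH] /=; first by rewrite inE.
rewrite inE => /orP [] h; first by exists c; rewrite ?mem_head.
by case: (IH h) => c' h1 h2; exists c'; rewrite // inE h1 orbT.
Qed.

Lemma pdisj_mem s c c' : pdisj s -> c \in s -> c' \in s -> c != c' -> dj c.1 c'.1.
Proof.
elim: s => [|d t IH] //= [hd hp]; rewrite !inE.
case/orP=> [/eqP -> | hc]; case/orP=> [/eqP -> | hc'] //; first by rewrite eqxx.
- by move=> _; apply: hd.
- by move=> _ x h1 h2; apply: (hd c hc x h2 h1).
- by apply: IH.
Qed.

Lemma pdisj_filter s (p : pred (constraint T)) : pdisj s -> pdisj (filter p s).
Proof.
elim: s => [|d t IH] //= [hd hp]; case: (p d) => /=; last by apply: IH.
split; last by apply: IH.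
by move=> c'; rewrite mem_filter => /andP [_ h]; apply: hd.
Qed.

Lemma pdisj_map s (f : constraint T -> constraint T) :
  (forall c, (f c).1 \subset c.1) -> pdisj s -> pdisj (map f s).
Proof.
move=> hf; elim: s => [|d t IH] //= [hd hp]; split; last by apply: IH.
move=> c' /mapP [c hc ->] x h1 h2.
exact: (hd c hc x (subsetP (hf d) _ h1) (subsetP (hf c) _ h2)).
Qed.

Lemma sum_filter s c : pdisj s -> c \in s -> c.1 != set0 ->
  sumn (map snd (filter (predC1 c) s)) + c.2 = sumn (map snd s).
Proof.
move=> hp hc hne.
elim: s hp hc => [|d t IH] //= [hd hp]; rewrite inE.
case: (eqVneq d c) => [hdc _ | hdc] /=; first subst d.
- have hct : c \notin t.
    apply/negP => hct; case/set0Pn: hne => x hx; exact: (hd c hct x hx hx).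
  have -> : filter (predC1 c) t = t.
    apply/all_filterP/allP => y hy /=; apply/negP => /eqP hyc; move: hct; by rewrite -hyc hy.
  by rewrite addnC.
- move=> hct; by rewrite -addnA IH.
Qed.
End Aux.

Lemma cstepP (T : finType) (e : rel T) Jn (C : cset T) c x :
  x \in cstep e Jn C c ->
  [\/ x = (nbh e c.1 :&: Jn, 1), (2 <= c.2 /\ x = (c.1 :&: Jn, c.2.-1)) |
      exists2 y, (y \in C /\ y != c) & x = (y.1 :&: Jn, y.2)].
Proof.
rewrite /cstep !in_fsetU; case/orP; first case/orP.
- by rewrite in_fset1 => /eqP ->; apply: Or31.
- case: ifP => h; last by rewrite in_fset0.
  by rewrite in_fset1 => /eqP ->; apply: Or32.
- case/imfsetP => y /= hy ->; apply: Or33; exists y => //.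
  by move: hy; rewrite in_fsetD1 => /andP [].
Qed.

Lemma cstep1 (T : finType) (e : rel T) Jn (C : cset T) c :
  (nbh e c.1 :&: Jn, 1) \in cstep e Jn C c.
Proof. by rewrite /cstep !in_fsetU in_fset1; apply/orP; left; apply/orP; left; apply/eqP. Qed.

Lemma cstep2 (T : finType) (e : rel T) Jn (C : cset T) c : 2 <= c.2 ->
  (c.1 :&: Jn, c.2.-1) \in cstep e Jn C c.
Proof. by move=> h; rewrite /cstep !in_fsetU h fset11 orbT. Qed.

Lemma cstep3 (T : finType) (e : rel T) Jn (C : cset T) c y : y \in C -> y != c ->
  (y.1 :&: Jn, y.2) \in cstep e Jn C c.
Proof.
move=> h1 h2; rewrite /cstep !in_fsetU; apply/orP; right.
by apply/imfsetP; exists y => //=; rewrite in_fsetD1 h2 h1.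
Qed.
From HB Require Import structures.
From mathcomp Require Import all_boot.
From mathcomp Require Import finmap.
From mathcomp Require Import zify.

Lemma ar1 (b r : nat) : 0 < b -> 1 + (b.-1 + 0 + r) = r + b.
Proof. rewrite -subn1; lia. Qed.
Lemma ar2 (b r : nat) : 0 < b -> ~~ (1 < b) -> 1 + (0 + r) = r + b.
Proof. lia. Qed.

Section Main.
Variables (T : finType) (e : rel T) (k l : nat) (S : {set T}) (J : nat -> {set T}).
Hypotheses (hk : 0 < k) (hS : independent e S) (hSk : #|S| = k) (hJ0 : J 0 = S)
  (hJ : forall i, 1 <= i <= l -> independent e (J i)).

Lemma indepJ i : i <= l -> independent e (J i).
Proof. case: i => [|i] h; [by rewrite hJ0 | by apply: hJ; rewrite h]. Qed.

Definition HasEmpty (C : cset T) := exists2 c0, c0 \in C & c0.1 = set0 /\ 0 < c0.2.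

Definition Inv i (C : cset T) : Prop :=
  HasEmpty C \/
  exists s, (forall c, (c \in C) = (c \in s)) /\ pdisj s /\
    (forall c, c \in s -> c.1 \subset J i /\ 0 < c.2) /\ sumn (map snd s) = k.

Lemma nbh0 : nbh e set0 = set0.
Proof.
apply/setP => v; rewrite !inE /=; apply/existsP => -[u]; by rewrite inE.
Qed.

Lemma empty_prop Jn C c : c \in C -> HasEmpty C -> HasEmpty (cstep e Jn C c).
Proof.
move=> hc [c0 h0 [h1 h2]]; case: (eqVneq c0 c) => [E|ne].
- exists (nbh e c.1 :&: Jn, 1); [exact: cstep1 | by rewrite /= -E h1 nbh0 set0I].
- exists (c0.1 :&: Jn, c0.2); [exact: cstep3 | by rewrite /= h1 set0I].
Qed.

Lemma unsat_empty Z C : sat_cset Z C -> HasEmpty C -> False.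
Proof.
move=> hsat [c0 h0 [h1 h2]]; have := hsat c0 h0.
by rewrite /sat_constraint h1 setI0 cards0 => h; rewrite -h in h2.
Qed.

Lemma inv_step i C c : i.+1 <= l -> Inv i C -> c \in C -> Inv i.+1 (cstep e (J i.+1) C c).
Proof.
move=> hi [hE | [s [hs [hp [hsub hsum]]]]] hc; first by left; apply: empty_prop.
have hcs : c \in s by rewrite -hs.
case: (eqVneq c.1 set0) => [h0|hne].
  left; exists (nbh e c.1 :&: J i.+1, 1); [exact: cstep1 | by rewrite /= h0 nbh0 set0I].
right.
set f := fun y : constraint T => (y.1 :&: J i.+1, y.2).
set rest := map f (filter (predC1 c) s).
set mid := if 2 <= c.2 then [:: (c.1 :&: J i.+1, c.2.-1)] else [::].
exists ((nbh e c.1 :&: J i.+1, 1) :: mid ++ rest).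
have hJp : independent e (J i) by apply: indepJ; exact: ltnW.
have djN : forall y, y \in rest -> dj (nbh e c.1 :&: J i.+1) y.1.
  move=> y /mapP [z]; rewrite mem_filter => /andP [hzc hz] -> /= v.
  rewrite !inE => /andP [/andP [hvX /existsP [u /andP [hu huv]]] _] /andP [hvz _].
  have := hJp u v (subsetP (proj1 (hsub c hcs)) _ hu) (subsetP (proj1 (hsub z hz)) _ hvz).
  by rewrite huv.
have djX : forall y, y \in rest -> dj (c.1 :&: J i.+1) y.1.
  move=> y /mapP [z]; rewrite mem_filter => /andP [hzc hz] -> /= v.
  rewrite !inE => /andP [hvX _] /andP [hvz _].
  have hcz : c != z by rewrite eq_sym. have hh := pdisj_mem hp hcs hz hcz. exact: (hh v hvX hvz).
have hpr : pdisj rest.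
  apply: pdisj_map; [by move=> z; exact: subsetIl | exact: pdisj_filter].
split.
  move=> x; apply/idP/idP.
  - case/cstepP => [-> | [h ->] | [y [hy hyc] ->]]; rewrite inE.
    + by apply/orP; left; apply/eqP.
    + by rewrite mem_cat /mid h mem_seq1 eqxx orbT.
    + rewrite mem_cat; apply/orP; right; apply/orP; right; apply/mapP; exists y => //.
      by rewrite mem_filter /= hyc -hs.
  - rewrite inE mem_cat => /orP [/eqP -> | /orP [] ].
    + exact: cstep1.
    + rewrite /mid; case: ifP => h; last by rewrite in_nil.
      rewrite mem_seq1 => /eqP ->; exact: cstep2.
    + case/mapP => y; rewrite mem_filter => /andP [hyc hy] ->; apply: cstep3; [by rewrite hs | exact: hyc].
split.
  split.
  - move=> y; rewrite mem_cat => /orP [].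
    + rewrite /mid; case: ifP => _; last by rewrite in_nil.
      rewrite mem_seq1 => /eqP -> /= v; rewrite !inE => /andP [/andP [hvX _] _] /andP [hv _].
      by rewrite hv in hvX.
    + exact: djN.
  - rewrite /mid; case: ifP => _ //=.
split.
  move=> y; rewrite inE mem_cat => /orP [/eqP -> | /orP []]; first by rewrite /= subsetIr.
  - rewrite /mid; case: ifP => h; last by rewrite in_nil.
    rewrite mem_seq1 => /eqP -> /=; split; [exact: subsetIr | by rewrite ltn_predRL].
  - case/mapP => z; rewrite mem_filter => /andP [_ hz] -> /=; split; [exact: subsetIr | exact: (proj2 (hsub z hz))].
have hm : map snd rest = map snd (filter (predC1 c) s) by rewrite /rest -map_comp.
have hb := proj2 (hsub c hcs).
have := sum_filter hp hcs hne.
rewrite /= map_cat sumn_cat hm /mid -hsum; case: ifP => h /= <-; [exact: ar1 hb | exact: ar2 hb (negbT h)].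
Qed.

Lemma inv_all i C : i <= l -> Cfam e J S k i C -> Inv i C.
Proof.
elim: i C => [|i IH] C hi /=.
- move=> ->; right; exists [:: (S,k)]; split.
    by move=> x; rewrite in_fset1 mem_seq1.
  split; first by split.
  split; last by rewrite /= addn0.
  by move=> y; rewrite mem_seq1 => /eqP -> /=; rewrite hJ0 subxx hk.
- move=> [C0 [c [hC0 [hc ->]]]]; apply: inv_step => //; apply: IH => //; exact: ltnW.
Qed.

Lemma cover i C Z : Inv i C -> sat_cset Z C -> #|Z| = k ->
  forall z, z \in Z -> exists2 c, c \in C & z \in c.1.
Proof.
move=> [hE | [s [hs [hp [hsub hsum]]]]] hsat hZ; first by case: (unsat_empty hsat hE).
have hall : forall c, c \in s -> #|Z :&: c.1| = c.2 by move=> c hc; apply: hsat; rewrite hs.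
have hc := cover_card hp hall.
rewrite hsum -hZ in hc.
have hsubZ : Z \subset U s.
  have <- : Z :&: U s = Z by apply/eqP; rewrite eqEcard subsetIl hc leqnn.
  exact: subsetIr.
move=> z hz; case: (mem_U (subsetP hsubZ z hz)) => c hc' hzc; exists c => //; by rewrite hs.
Qed.

Lemma inv_props i C : Inv i C -> ~ HasEmpty C ->
  (forall c, c \in C -> c.1 \subset J i /\ 0 < c.2) /\
  (forall c c', c \in C -> c' \in C -> c != c' -> dj c.1 c'.1).
Proof.
move=> [hE | [s [hs [hp [hsub hsum]]]]] hn; first by case: hn.
split; first by move=> c; rewrite hs; exact: hsub.
by move=> c c'; rewrite !hs; exact: pdisj_mem.
Qed.

Lemma reach_refl : TS_reachable e k S S.
Proof.
exists 0, (fun _ => S); split => //; split => //; split => //.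
Qed.

Lemma reach_snoc A B : TS_reachable e k S A -> independent e B -> #|B| = k ->
  slide e A B -> TS_reachable e k S B.
Proof.
case=> m [I [h0 [hm [hI hsl]]]] hB hBk hAB.
exists m.+1, (fun j => if j <= m then I j else B); split => //=.
split; first by rewrite ltnn.
split.
  by move=> j hj; case: ifP => h; [exact: hI | by []].
move=> j hj; rewrite ltnS in hj; rewrite hj.
case: (eqVneq j m) => [-> | hjm]; first by rewrite ltnn hm.
have hj' : j < m by rewrite ltn_neqAle hjm hj.
rewrite hj'; exact: hsl.
Qed.


Lemma reach i C (Z : {set T}) : i <= l -> Cfam e J S k i C -> Z \subset J i -> independent e Z ->
  #|Z| = k -> sat_cset Z C -> TS_reachable e k S Z.
Proof.
elim: i C Z => [|i IH] C Z hi /=.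
  move=> -> hZJ hZ hZk hsat.
  rewrite hJ0 in hZJ.
  have -> : Z = S by apply/eqP; rewrite eqEcard hZJ hSk hZk leqnn.
  exact: reach_refl.
move=> [C0 [c [hC0 [hc ->]]]] hZJ hZ hZk hsat.
have hInv0 := inv_all (ltnW hi) hC0.
have hInv1 := inv_step hi hInv0 hc.
have hcov := cover hInv1 hsat hZk.
have hJp := indepJ (ltnW hi).
have hne0 : ~ HasEmpty C0.
  by move=> hE; apply: (unsat_empty hsat); apply: empty_prop.
have [hsub0 hdj0] := inv_props hInv0 hne0.
have hX := proj1 (hsub0 c hc).
have := hsat _ (cstep1 e (J i.+1) C0 c); rewrite /sat_constraint /= => /eqP /cards1P [p hp].
have hpin : p \in Z :&: (nbh e c.1 :&: J i.+1) by rewrite hp set11.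
have hpZ : p \in Z by move: hpin; rewrite inE => /andP [].
have hpN : p \in nbh e c.1 by move: hpin; rewrite !inE => /and3P [].
move: (hpN); rewrite inE => /andP [hpX /existsP [x /andP [hxX hxp]]].
have hxZ : x \notin Z.
  by apply/negP => hxZ; have := hZ x p hxZ hpZ; rewrite hxp.
pose Z' := x |: (Z :\ p).
have hZ'J : Z' \subset J i.
  apply/subsetP => z; rewrite !inE => /orP [/eqP -> | /andP [hzp hz]]; first exact: (subsetP hX _ hxX).
  case: (hcov z hz) => c'' /cstepP [-> | [h2 ->] | [y [hy hyc] ->]] /=.
  - move=> hzin.
    have : z \in Z :&: (nbh e c.1 :&: J i.+1) by rewrite inE hz hzin.
    by rewrite hp inE => /eqP hzp'; rewrite hzp' eqxx in hzp.
  - rewrite inE => /andP [h _]; exact: (subsetP hX _ h).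
  - rewrite inE => /andP [h _]; exact: (subsetP (proj1 (hsub0 y hy)) _ h).
have hZ'i : independent e Z'.
  by move=> a b ha hb; apply: hJp; [exact: (subsetP hZ'J _ ha) | exact: (subsetP hZ'J _ hb)].
have hxZp : x \notin Z :\ p by rewrite inE negb_and hxZ orbT.
have hZ'k : #|Z'| = k by rewrite /Z' cardsU1 hxZp -hZk (cardsD1 p Z) hpZ.
have hpx : p != x by apply/negP => /eqP E; rewrite E hxX in hpX.
have hsat' : sat_cset Z' C0.
  move=> c' hc'; rewrite /sat_constraint.
  case: (eqVneq c' c) => [-> | hne].
  - have hZX : Z' :&: c.1 = x |: (Z :&: c.1).
      apply/setP => z; rewrite !inE; case: (eqVneq z x) => [-> | hzx] /=; first by rewrite hxX.
      case: (eqVneq z p) => [-> | hzp] /=; last by [].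
      by rewrite (negPf hpX) andbF.
    rewrite hZX cardsU1 inE (negPf hxZ) /=.
    have hb := proj2 (hsub0 c hc).
    case: (leqP 2 c.2) => h2.
      have := hsat _ (cstep2 e (J i.+1) C0 h2); rewrite /sat_constraint /=.
      rewrite setIA setIAC (setIidPl hZJ) => ->.
      by rewrite add1n prednK // ltnW.
    have -> : Z :&: c.1 = set0.
      apply/setP => z; rewrite !inE; apply/negP => /andP [hz hzX].
      case: (hcov z hz) => c'' /cstepP [-> | [h ->] | [y [hy hyc] ->]] /=.
      + by rewrite !inE hzX.
      + by rewrite leqNgt h2 in h.
      + rewrite inE => /andP [hzy _]; apply: (hdj0 c y hc hy _ z hzX hzy); by rewrite eq_sym.
    rewrite cards0; move: hb h2; clear; case: c.2 => [|[|n]] //.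
  - have := hsat _ (cstep3 e (J i.+1) hc' hne); rewrite /sat_constraint /=.
    rewrite setIA setIAC (setIidPl hZJ) => <-.
    have -> : Z' :&: c'.1 = Z :&: c'.1 => //; apply/setP => z; rewrite !inE.
    case: (eqVneq z x) => [-> | hzx] /=.
      have hxc' : x \notin c'.1.
        by apply/negP => hxc'; apply: (hdj0 c c' hc hc' _ x hxX hxc'); rewrite eq_sym.
      by rewrite (negPf hxc') (negPf hxZ).
    case: (eqVneq z p) => [-> | hzp] //=.
    have hpc' : p \notin c'.1.
      apply/negP => hpc'.
      have := hJp x p (subsetP hX _ hxX) (subsetP (proj1 (hsub0 c' hc')) _ hpc').
      by rewrite hxp.
    by rewrite (negPf hpc') andbF.
have hreach' := IH C0 Z' (ltnW hi) hC0 hZ'J hZ'i hZ'k hsat'.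
apply: (reach_snoc hreach' hZ hZk).
exists x, p; split; first by rewrite /Z' setU11.
split; first by rewrite /Z' !inE (negPf hpx) eqxx.
split; first exact: hxp.
by rewrite /Z' setU1K // setD1K.
Qed.

End Main.

Theorem lemma3p5 (T : finType) (e : rel T)
  (e_sym : symmetric e) (e_irr : irreflexive e)
  (k l : nat) (hk : (1 <= k)%N) (hl : (1 <= l)%N)
  (S : {set T}) (hS : independent e S) (hSk : #|S| = k)
  (J : nat -> {set T}) (hJ0 : J 0%N = S)
  (hJ : forall i, (1 <= i <= l)%N -> independent e (J i))
  (i : nat) (hi : (i <= l)%N)
  (Z : {set T}) (hZJ : Z \subset J i) (hZ : independent e Z) (hZk : #|Z| = k)
  (hC : exists C, Cfam e J S k i C /\ sat_cset Z C) :
  TS_reachable e k S Z.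
Proof.
case: hC => C [hCf hsat].
exact: (reach hk hS hSk hJ0 hJ hi hCf hZJ hZ hZk hsat).
Qed.
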